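(* Let $(X,\kappa)$ be a finite digital image which is strongly contractible, i.e. $\mathrm{id}_X$ is strongly homotopic to a constant map. Then every continuous map $f:X\to X$ has a fixed point or at least two approximate fixed points.
   Context: A digital image is a pair $(X,\kappa)$ where $X$ is a set and $\kappa$ is a symmetric irreflexive relation on $X$ (the adjacency). Write $x\leftrightarrow y$ if adjacent, $x\Leftrightarrow y$ if adjacent or equal. A map $f$ is continuous if $x\leftrightarrow y$ implies $f(x)\Leftrightarrow f(y)$. A point $x$ is an approximate fixed point of $f:X\to X$ if $f(x)\Leftrightarrow x$. The digital interval $[0,m]_{\mathbb Z}$ has consecutive integers adjacent. Continuous $f,g:X\to Y$ are strongly homotopic ($f\simeq^* g$) if there exist $m\ge1$ and $H:X\times[0,m]_{\mathbb Z}\to Y$ with $H(\cdot,0)=f$, $H(\cdot,m)=g$, such that whenever $(x,t)\neq(x',t')$, $x\Leftrightarrow x'$ and $|t-t'|\le1$, we have $H(x,t)\Leftrightarrow H(x',t')$. *)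

(* Defs.v *)
(* A finite digital image is (X, kappa) with X : finType and
   kappa : rel X symmetric and irreflexive. *)
From mathcomp Require Import all_boot.
Set Implicit Arguments. Unset Strict Implicit. Unset Printing Implicit Defensive.

Definition adjacency (X : Type) (k : rel X) : Prop :=
  (forall x y, k x y -> k y x) /\ (forall x, ~~ k x x).

Definition adj_or_eq (X : eqType) (k : rel X) (x y : X) : bool :=
  (x == y) || k x y.

Definition dcontinuous (X Y : eqType) (kX : rel X) (kY : rel Y) (f : X -> Y) : Prop :=
  forall x y, kX x y -> adj_or_eq kY (f x) (f y).

Definition approx_fixed (X : eqType) (k : rel X) (f : X -> X) (x : X) : Prop :=
  adj_or_eq k (f x) x.

(* strong homotopy, with time ranging over the digital interval [0,m]_Z,
   modelled as naturals t <= m (values of H at t > m are irrelevant). *)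
Definition strongly_homotopic (X Y : eqType) (kX : rel X) (kY : rel Y)
    (f g : X -> Y) : Prop :=
  dcontinuous kX kY f /\ dcontinuous kX kY g /\
  exists (m : nat) (H : X -> nat -> Y),
    1 <= m /\
    (forall x, H x 0 = f x) /\ (forall x, H x m = g x) /\
    (forall x x' t t', t <= m -> t' <= m ->
       (x, t) <> (x', t') -> adj_or_eq kX x x' ->
       (t <= t'.+1) -> (t' <= t.+1) ->
       adj_or_eq kY (H x t) (H x' t')).

Definition strongly_contractible (X : eqType) (k : rel X) : Prop :=
  exists c : X, strongly_homotopic k k id (fun _ => c).

(* Main.v *)
Require Import Defs.
From mathcomp Require Import all_boot.
From mathcomp Require Import zify.

Theorem theorem3p7 (X : finType) (k : rel X) :
  adjacency k -> strongly_contractible k ->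
  forall f : X -> X, dcontinuous k k f ->
    (exists x, f x = x) \/
    (exists x y, x <> y /\ approx_fixed k f x /\ approx_fixed k f y).
Proof.
move=> [ksym kirr] [c [_ [_ [m [H [m1 [H0 [Hm HH]]]]]]]] f fc.
have fc' : forall x y, adj_or_eq k x y -> adj_or_eq k (f x) (f y).
  move=> x y /orP [/eqP -> | kxy]; first by rewrite /adj_or_eq eqxx.
  exact: fc.
pose b := fix b (s : nat) : X :=
  match s with 0 => c | s'.+1 => H (f (b s')) (m - s'.+1) end.
have bS : forall s, b s.+1 = H (f (b s)) (m - s.+1) by [].
have claim : forall s, s < m -> adj_or_eq k (b s) (b s.+1).
  elim=> [|s IH] hs.
    rewrite bS /=.
    rewrite -{1}(Hm (f c)).
    apply: HH; try lia.
      by move=> [] ; lia.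
    by rewrite /adj_or_eq eqxx.
  rewrite (bS s.+1) (bS s).
  apply: HH; try lia.
    by move=> [] _; lia.
  apply: fc'; apply: IH; lia.
have hy := claim m.-1 ltac:(lia).
have em : m.-1.+1 = m by lia.
rewrite em in hy.
have bm : b m = f (b m.-1).
  by rewrite -{1}em bS em subnn H0.
rewrite bm in hy.
set y := b m.-1 in hy bm *.
have ay : adj_or_eq k (f y) y.
  move: hy => /orP [/eqP <- | kk]; first by rewrite /adj_or_eq eqxx.
  by rewrite /adj_or_eq ksym ?orbT.
case: (eqVneq (f y) y) => [e|ne]; first by left; exists y.
right; exists y, (f y); split; first by move=> e; rewrite -e eqxx in ne.
split; first exact: ay.
rewrite /approx_fixed; apply: fc.
by move: ay => /orP [/eqP e|//]; rewrite e eqxx in ne.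
Qed.
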